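(* Let $M=(C,A,B)$ with $C\in\mathbb{R}^{p\times n}$, $A\in\mathbb{R}^{n\times n}$, $B\in\mathbb{R}^{n\times m}$ and $\rho(A)<1$, and fix an integer $d>0$. Then $$\|\mathcal{H}_{d,\infty,\infty}\|_2\le\|\mathcal{H}_{0,\infty,\infty}-\bar{\mathcal{H}}_{0,d,d}\|_2\le\sqrt2\,\|\mathcal{H}_{d,\infty,\infty}\|_2\le\sqrt2\,\|\mathcal{T}_{d,\infty}\|_2 .$$
   Context: $\mathcal{H}_{k,a,b}$ is the block Hankel matrix whose $(i,j)$ block ($1\le i\le a$, $1\le j\le b$, with $a=b=\infty$ allowed) is $CA^{k+i+j-2}B$. $\mathcal{T}_{k,\infty}$ is the infinite block lower-triangular Toeplitz matrix with zero diagonal blocks and $(i,j)$ block $CA^{k+i-j-1}B$ for $i>j$. For a finite matrix $P$, $\bar P=\begin{bmatrix}P&0\\0&0\end{bmatrix}$ is its zero padding to a doubly infinite matrix. Norms of infinite matrices are operator norms on $\ell^2$. *)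

(* Defs.v *)
From HB Require Import structures.
From mathcomp Require Import all_boot all_order all_algebra.
From mathcomp Require Import complex.
From mathcomp Require Import all_classical all_reals.
From mathcomp Require Import ereal.
Set Implicit Arguments. Unset Strict Implicit. Unset Printing Implicit Defensive.
Import Order.TTheory GRing.Theory Num.Theory.
Local Open Scope ring_scope.
Local Open Scope classical_set_scope.

(* An infinite block matrix with p x m blocks, indexed by block row i and
   block column j (0-based). *)
Definition blockmx (R : realType) (p m : nat) := nat -> nat -> 'M[R]_(p, m).

Definition sqnorm (R : realType) (k : nat) (v : 'cV[R]_k) : R :=
  \sum_(a < k) v a 0 ^+ 2.

(* A finitely supported block vector is given by the list of its first blocks. *)
Definition bapply (R : realType) (p m : nat) (F : blockmx R p m)
  (x : seq 'cV[R]_m) : nat -> 'cV[R]_p :=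
  fun i => \sum_(j < size x) F i j *m x`_j.

Definition l2norm (R : realType) (p : nat) (y : nat -> 'cV[R]_p) : \bar R :=
  ereal_sup (range (fun N : nat => (Num.sqrt (\sum_(i < N) sqnorm (y i)))%:E)).

(* Operator norm on l^2 (supremum over the dense subspace of finitely
   supported vectors of norm <= 1). *)
Definition opnorm (R : realType) (p m : nat) (F : blockmx R p m) : \bar R :=
  ereal_sup [set l2norm (bapply F x) | x in
    [set x : seq 'cV[R]_m | \sum_(j < size x) sqnorm x`_j <= 1]].

Definition hankel (R : realType) (p n m : nat) (C : 'M[R]_(p, n))
  (A : 'M[R]_n) (B : 'M[R]_(n, m)) (k : nat) : blockmx R p m :=
  fun i j => C *m (A ^+ (k + i + j)) *m B.

(* zero padding of the finite H_{k,a,b} *)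
Definition hankel_pad (R : realType) (p n m : nat) (C : 'M[R]_(p, n))
  (A : 'M[R]_n) (B : 'M[R]_(n, m)) (k a b : nat) : blockmx R p m :=
  fun i j => if (i < a)%N && (j < b)%N then C *m (A ^+ (k + i + j)) *m B else 0.

Definition toeplitz (R : realType) (p n m : nat) (C : 'M[R]_(p, n))
  (A : 'M[R]_n) (B : 'M[R]_(n, m)) (k : nat) : blockmx R p m :=
  fun i j => if (j < i)%N then C *m (A ^+ (k + i - j - 1)) *m B else 0.

Definition bsub (R : realType) (p m : nat) (F G : blockmx R p m) : blockmx R p m :=
  fun i j => F i j - G i j.

Definition spec_rad_lt1 (R : realType) (n : nat) (A : 'M[R]_n) : Prop :=
  forall l : R[i], eigenvalue (map_mx (fun x : R => (x%:C)%C) A) l -> `|l| < 1.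

(* Main.v *)
Require Import Defs.
From HB Require Import structures.
From mathcomp Require Import all_boot all_order all_algebra.
From mathcomp Require Import complex.
From mathcomp Require Import all_classical all_reals.
From mathcomp Require Import ereal.
Import Order.TTheory GRing.Theory Num.Theory.
Local Open Scope ring_scope.
Local Open Scope ereal_scope.
Set Implicit Arguments. Unset Strict Implicit.
From mathcomp Require Import zify.
Local Open Scope ring_scope.

Section Helpers.
Variable R : realType.

Lemma sqnorm_ge0 k (v : 'cV[R]_k) : 0 <= sqnorm v.
Proof. by apply: sumr_ge0 => a _; apply: sqr_ge0. Qed.

Lemma sum_shift_le (f : nat -> R) d K : (forall j, 0 <= f j) ->
  \sum_(i < K) f (d + i)%N <= \sum_(i < d + K) f i.
Proof.
move=> f0; rewrite big_split_ord /= lerDr; exact: sumr_ge0.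
Qed.

Lemma sum_mono (f : nat -> R) N M : (forall j, 0 <= f j) -> (N <= M)%N ->
  \sum_(i < N) f i <= \sum_(i < M) f i.
Proof.
move=> f0 NM; have e : M = (N + (M - N))%N by lia.
move: (M - N)%N e => k e; subst M.
rewrite big_split_ord /= lerDl; exact: sumr_ge0.
Qed.

Lemma sum_drop (V : zmodType) (f : nat -> V) s d : (forall j, (j < d)%N -> f j = 0) ->
  \sum_(j < s) f j = \sum_(j < s - d) f (d + j)%N.
Proof.
move=> hf; case: (leqP d s) => hds.
  have e : s = (d + (s - d))%N by lia.
  move: (s - d)%N e => k e; subst s.
  rewrite big_split_ord /= big1 ?add0r // => j _; apply: hf; exact: ltn_ord.
have -> : (s - d = 0)%N by lia.
rewrite big_ord0 big1 // => j _; apply: hf; exact: ltn_trans (ltn_ord j) hds.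
Qed.

Lemma sum_drop_le (f : nat -> R) s d : (forall j, 0 <= f j) ->
  \sum_(j < s - d) f (d + j)%N <= \sum_(j < s) f j.
Proof.
move=> f0; case: (leqP d s) => hds.
  have e : s = (d + (s - d))%N by lia.
  move: (s - d)%N e => k e; subst s; exact: sum_shift_le.
have -> : (s - d = 0)%N by lia.
rewrite big_ord0; exact: sumr_ge0.
Qed.

Lemma l2norm_ge p (y : nat -> 'cV[R]_p) N :
  ((Num.sqrt (\sum_(i < N) sqnorm (y i)))%:E <= l2norm y)%E.
Proof. by apply: ereal_sup_ubound; exists N. Qed.

Lemma l2norm_ub p (y : nat -> 'cV[R]_p) e :
  (forall N, ((Num.sqrt (\sum_(i < N) sqnorm (y i)))%:E <= e)%E) -> (l2norm y <= e)%E.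
Proof. by move=> h; apply: ub_ereal_sup => _ [N _ <-]. Qed.

Lemma l2norm_le p (y z : nat -> 'cV[R]_p) :
  (forall N, exists M, \sum_(i < N) sqnorm (y i) <= \sum_(i < M) sqnorm (z i)) ->
  (l2norm y <= l2norm z)%E.
Proof.
move=> h; apply: l2norm_ub => N; have [M hM] := h N.
apply: (@le_trans _ _ ((Num.sqrt (\sum_(i < M) sqnorm (z i)))%:E)); last exact: l2norm_ge.
rewrite lee_fin; exact: ler_wsqrtr.
Qed.

Lemma opnorm_ge p m (F : blockmx R p m) x : \sum_(j < size x) sqnorm x`_j <= 1 ->
  (l2norm (bapply F x) <= opnorm F)%E.
Proof. by move=> hx; apply: ereal_sup_ubound; exists x. Qed.

Lemma opnorm_ub p m (F : blockmx R p m) e :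
  (forall x, \sum_(j < size x) sqnorm x`_j <= 1 -> (l2norm (bapply F x) <= e)%E) ->
  (opnorm F <= e)%E.
Proof. by move=> h; apply: ub_ereal_sup => _ [x hx <-]; apply: h. Qed.

Variables (p n m : nat) (C : 'M[R]_(p, n)) (A : 'M[R]_n) (B : 'M[R]_(n, m)) (d : nat).

Let G := bsub (hankel C A B 0) (hankel_pad C A B 0 d d).

Lemma L1 x i : bapply (hankel C A B d) x i = bapply G x (d + i)%N.
Proof.
rewrite /bapply; apply: eq_bigr => j _.
by rewrite /G /bsub /hankel /hankel_pad ltnNge leq_addr /= subr0 add0n.
Qed.

Lemma L2 x i : (i < d)%N -> bapply G x i = bapply (hankel C A B d) (drop d x) i.
Proof.
move=> hid; rewrite /bapply size_drop.
rewrite (@sum_drop _ (fun j => G i j *m x`_j) _ d); last first.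
  by move=> j hj; rewrite /G /bsub /hankel_pad hid hj /= subrr mul0mx.
apply: eq_bigr => j _.
rewrite /G /bsub /hankel /hankel_pad nth_drop hid /= ltnNge leq_addr /= subr0.
by rewrite add0n addnCA addnA.
Qed.

Lemma L3 x i : bapply (hankel C A B d) x i =
  bapply (toeplitz C A B d) (rev x) (size x + i)%N.
Proof.
rewrite /bapply size_rev [RHS](reindex_inj rev_ord_inj) /=.
apply: eq_bigr => j _; rewrite /toeplitz /hankel.
have hj := ltn_ord j.
have -> : (size x - j.+1 < size x + i)%N by lia.
rewrite nth_rev; last by lia.
have -> : (size x - (size x - j.+1).+1 = j)%N by lia.
have -> : (d + (size x + i) - (size x - j.+1) - 1 = d + i + j)%N by lia.
by [].
Qed.

Lemma norm_rev (x : seq 'cV[R]_m) :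
  \sum_(j < size (rev x)) sqnorm (rev x)`_j = \sum_(j < size x) sqnorm x`_j.
Proof.
rewrite size_rev [LHS](reindex_inj rev_ord_inj) /=.
apply: eq_bigr => j _; have hj := ltn_ord j.
rewrite nth_rev; last by lia.
by have -> : (size x - (size x - j.+1).+1 = j)%N by lia.
Qed.

Lemma norm_drop (x : seq 'cV[R]_m) :
  \sum_(j < size (drop d x)) sqnorm (drop d x)`_j <= \sum_(j < size x) sqnorm x`_j.
Proof.
rewrite size_drop.
under eq_bigr do rewrite nth_drop.
apply: (@sum_drop_le (fun j => sqnorm x`_j)) => j; exact: sqnorm_ge0.
Qed.

End Helpers.
Lemma etrans {R : realType} {x y z : \bar R} : (y <= z)%E -> (x <= y)%E -> (x <= z)%E.
Proof. by move=> h1 h2; exact: le_trans h2 h1. Qed.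
Unset Implicit Arguments. Set Strict Implicit.
Local Open Scope ereal_scope.

Theorem proposition13 (R : realType) (p n m : nat)
  (C : 'M[R]_(p, n)) (A : 'M[R]_n) (B : 'M[R]_(n, m)) (d : nat) :
  spec_rad_lt1 A -> (0 < d)%N ->
  opnorm (hankel C A B d)
    <= opnorm (bsub (hankel C A B 0) (hankel_pad C A B 0 d d)) /\
  opnorm (bsub (hankel C A B 0) (hankel_pad C A B 0 d d))
    <= (Num.sqrt (2 : R))%:E * opnorm (hankel C A B d) /\
  (Num.sqrt (2 : R))%:E * opnorm (hankel C A B d)
    <= (Num.sqrt (2 : R))%:E * opnorm (toeplitz C A B d).
Proof.
move=> _ _.
set H := hankel C A B d.
set G := bsub (hankel C A B 0) (hankel_pad C A B 0 d d).
split.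
  apply: opnorm_ub => x hx; apply: (etrans (opnorm_ge G hx)).
  apply: l2norm_le => N; exists (d + N)%N.
  under eq_bigr do rewrite L1.
  by apply: (@sum_shift_le _ (fun i => sqnorm (bapply G x i))) => j; apply: sqnorm_ge0.
split; last first.
  apply: lee_wpmul2l; first by rewrite lee_fin sqrtr_ge0.
  apply: opnorm_ub => x hx.
  have hx' : (\sum_(j < size (rev x)) sqnorm (rev x)`_j <= 1)%R by rewrite norm_rev.
  apply: (etrans (opnorm_ge _ hx')).
  apply: l2norm_le => K; exists (size x + K)%N.
  under eq_bigr do rewrite L3.
  by apply: (@sum_shift_le _ (fun i => sqnorm (bapply (toeplitz C A B d) (rev x) i))) => j;
    apply: sqnorm_ge0.
have h0 : 0 <= opnorm H.
  have hx0 : (\sum_(j < size ([::] : seq 'cV[R]_m)) sqnorm ([::] : seq 'cV[R]_m)`_j <= 1)%R.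
    by rewrite big_ord0.
  apply: (etrans (opnorm_ge H hx0)).
  by apply: (etrans (l2norm_ge _ 0)); rewrite big_ord0 sqrtr0.
case E: (opnorm H) h0 => [r| |] h0; last by [].
  have r0 : (0 <= r)%R by rewrite -lee_fin.
  have hb : forall y : seq 'cV[R]_m, (\sum_(j < size y) sqnorm y`_j <= 1)%R ->
      forall K, (\sum_(i < K) sqnorm (bapply H y i) <= r ^+ 2)%R.
    move=> y hy K.
    have := le_trans (l2norm_ge _ K) (opnorm_ge H hy); rewrite E lee_fin => hs.
    have ps0 : (0 <= \sum_(i < K) sqnorm (bapply H y i))%R.
      by apply: sumr_ge0 => i _; apply: sqnorm_ge0.
    rewrite -(sqr_sqrtr ps0) !expr2; apply: ler_pM => //; exact: sqrtr_ge0.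
  apply: opnorm_ub => x hx; apply: l2norm_ub => N.
  rewrite -EFinM lee_fin.
  have -> : (Num.sqrt 2 * r = Num.sqrt (2 * r ^+ 2))%R.
    by rewrite sqrtrM ?ler0n // sqrtr_sqr ger0_norm.
  apply: ler_wsqrtr.
  apply: (@le_trans _ _ (\sum_(i < d + N) sqnorm (bapply G x i))%R).
    by apply: (@sum_mono _ (fun i => sqnorm (bapply G x i))) => [j|]; [apply: sqnorm_ge0 | apply: leq_addl].
  rewrite big_split_ord /=.
  have -> : (2 * r ^+ 2 = r ^+ 2 + r ^+ 2)%R by rewrite mulr2n mulrDl mul1r.
  apply: lerD.
    under eq_bigr => i _ do rewrite (L2 C A B x (ltn_ord i)).
    apply: hb; exact: le_trans (norm_drop d x) hx.
  under eq_bigr => i _ do rewrite -L1.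
  exact: hb.
by rewrite gt0_muley ?leey // lte_fin sqrtr_gt0.
Qed.
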